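(* Let $(\mathcal{A},\mathbf{m})$ be a multiarrangement in $\mathbb{Q}^l$ with $\mathcal{A}=\{H_1,\dots,H_n\}$, $H_i=\alpha_i^{-1}(0)$, where the $\alpha_i\in S_\mathbb{Z}=\mathbb{Z}[x_1,\dots,x_l]$ are linear forms such that no prime number divides any $\alpha_i$. Then $D(\mathcal{A},\mathbf{m})\cong\operatorname{Ker}(\varphi_\mathbb{Z})\otimes_\mathbb{Z}\mathbb{Q}$.
   Context: $S=\mathbb{Q}[x_1,\dots,x_l]$, $\mathbf{m}\colon\mathcal{A}\to\mathbb{Z}_{\ge0}$, and $D(\mathcal{A},\mathbf{m})=\{\delta=\sum_j f_j\partial_{x_j}: f_j\in S,\ \delta(\alpha_i)\in\alpha_i^{\mathbf{m}(H_i)}S\ \forall i\}$, viewed as an $S$-submodule of $S^l$ via $\delta\mapsto(f_1,\dots,f_l)^t$. Let $M(\mathcal{A},\mathbf{m})\subseteq S_\mathbb{Z}^n$ be the $S_\mathbb{Z}$-submodule generated by $\alpha_i^{\mathbf{m}(H_i)}e_i$, $i=1,\dots,n$ ($e_i$ the standard basis vectors), let $A(\mathcal{A})=(\partial\alpha_i/\partial x_j)_{i,j}$ (an $n\times l$ integer matrix), and let $\varphi_\mathbb{Z}\colon S_\mathbb{Z}^l\to S_\mathbb{Z}^n/M(\mathcal{A},\mathbf{m})$ be $(g_1,\dots,g_l)^t\mapsto A(\mathcal{A})(g_1,\dots,g_l)^t$ modulo $M(\mathcal{A},\mathbf{m})$. *)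

(* Defs.v *)
From HB Require Import structures.
From mathcomp Require Import all_boot all_order all_algebra.
From mathcomp Require Import mpoly.
Set Implicit Arguments. Unset Strict Implicit. Unset Printing Implicit Defensive.
Import Order.TTheory GRing.Theory Num.Theory.
Local Open Scope ring_scope.

(* S_Z = Z[x_1..x_l] is {mpoly int[l]},  S = Q[x_1..x_l] is {mpoly rat[l]}.
   The arrangement is given by its integer coefficient matrix
   A = A(cA) = (d alpha_i / d x_j) : 'M[int]_(n,l); alpha_i = sum_j A i j x_j. *)

Definition alphaR (R : comNzRingType) (n l : nat) (A : 'M[int]_(n, l)) (i : 'I_n)
  : {mpoly R[l]} :=
  \sum_(j < l) ((A i j)%:~R : R) *: 'X_j.

Definition Apoly (R : comNzRingType) (n l : nat) (A : 'M[int]_(n, l))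
  : 'M[{mpoly R[l]}]_(n, l) :=
  map_mx (fun z : int => ((z%:~R : R)%:MP)) A.

Definition no_prime_divides (n l : nat) (A : 'M[int]_(n, l)) : Prop :=
  forall (i : 'I_n) (p : nat), prime p -> ~ (forall j : 'I_l, (p%:Z %| A i j)%Z).

(* the hyperplanes H_i = ker alpha_i are pairwise distinct *)
Definition distinct_hyperplanes (n l : nat) (A : 'M[int]_(n, l)) : Prop :=
  forall i i' : 'I_n, i != i' ->
    ~ exists c : rat, forall j : 'I_l, ((A i j)%:~R : rat) = c * (A i' j)%:~R.

(* D(cA, m) as a subset of S^l : delta = (f_1,..,f_l)^t with
   delta(alpha_i) = sum_j f_j * dalpha_i/dx_j in alpha_i^(m H_i) S *)
Definition Dmod (n l : nat) (A : 'M[int]_(n, l)) (m : 'I_n -> nat)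
  (delta : 'cV[{mpoly rat[l]}]_l) : Prop :=
  forall i : 'I_n, exists h : {mpoly rat[l]},
    (Apoly rat A *m delta) i ord0 = (alphaR rat A i) ^+ (m i) * h.

Definition Mmod (n l : nat) (A : 'M[int]_(n, l)) (m : 'I_n -> nat)
  (v : 'cV[{mpoly int[l]}]_n) : Prop :=
  exists h : 'I_n -> {mpoly int[l]},
    v = \sum_(i < n) h i *: ((alphaR int A i) ^+ (m i) *: delta_mx i ord0).

(* Ker(phi_Z), phi_Z : S_Z^l -> S_Z^n / M, g |-> A g mod M *)
Definition ker_phiZ (n l : nat) (A : 'M[int]_(n, l)) (m : 'I_n -> nat)
  (g : 'cV[{mpoly int[l]}]_l) : Prop :=
  Mmod A m (Apoly int A *m g).

Definition embZQ (l : nat) (g : 'cV[{mpoly int[l]}]_l) : 'cV[{mpoly rat[l]}]_l :=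
  map_mx (map_mpoly (fun z : int => (z%:~R : rat))) g.

(* the image of Ker(phi_Z) (x)_Z Q in S_Z^l (x)_Z Q = S^l :
   the finite Q-linear combinations of elements of Ker(phi_Z) *)
Definition ker_tensorQ (n l : nat) (A : 'M[int]_(n, l)) (m : 'I_n -> nat)
  (delta : 'cV[{mpoly rat[l]}]_l) : Prop :=
  exists (k : nat) (c : 'I_k -> rat) (g : 'I_k -> 'cV[{mpoly int[l]}]_l),
    (forall t, ker_phiZ A m (g t)) /\
    delta = \sum_(t < k) (c t)%:MP *: embZQ (g t).

(* Main.v *)
Require Import Defs.
From HB Require Import structures.
From mathcomp Require Import all_boot all_order all_algebra.
From mathcomp Require Import mpoly.
From mathcomp Require Import ring.
Local Open Scope ring_scope.
Import GRing.Theory Num.Theory.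

Section Aux.
Variable l : nat.
Local Notation mq := (map_mpoly (n:=l) (fun z : int => (z%:~R : rat))).

Lemma mq_inj : injective mq.
Proof.
move=> p q E; apply/mpolyP => m; apply: (@intr_inj rat).
by rewrite -!mcoeff_map_mpoly E.
Qed.

Lemma clear1 (p : {mpoly rat[l]}) :
  exists N : int, N != 0 /\ exists q, mq q = N%:~R * p.
Proof.
rewrite (mpolyE p); elim: (msupp p) => [|x s [N [N0 [q Hq]]]].
  by exists 1; split => //; exists 0; rewrite big_nil rmorph0 mulr0.
rewrite big_cons; set c := p@_x.
exists (N * denq c); split; first by rewrite mulf_neq0 // denq_neq0.
exists (q * (denq c)%:~R + (numq c *: 'X_[x]) * N%:~R).
rewrite rmorphD !rmorphM /= !rmorph_int map_mpolyZ map_mpolyX Hq.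
rewrite -[X in X *: 'X_[x]]/((numq c)%:~R : rat) numqE.
rewrite -!mul_mpolyC rmorphM /= !rmorph_int.
ring.
Qed.

Lemma clearF (I : finType) (F : I -> {mpoly rat[l]}) :
  exists N : int, N != 0 /\ forall i, exists q, mq q = N%:~R * F i.
Proof.
suff [N [N0 HN]] : exists N : int, N != 0 /\
    forall i, i \in enum I -> exists q, mq q = N%:~R * F i.
  by exists N; split => // i; apply: HN; rewrite mem_enum.
elim: (enum I) => [|x s [N [N0 HN]]]; first by exists 1.
have [N1 [N10 [q1 Hq1]]] := clear1 (F x).
exists (N1 * N); split; first by rewrite mulf_neq0.
move=> i; rewrite in_cons => /orP [/eqP -> | /HN [q Hq]].
  by exists (q1 * N%:~R); rewrite rmorphM /= rmorph_int Hq1 intrM; ring.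
by exists (q * N1%:~R); rewrite rmorphM /= rmorph_int Hq intrM; ring.
Qed.

Lemma mq_alpha n (A : 'M[int]_(n, l)) i : mq (alphaR int A i) = alphaR rat A i.
Proof.
rewrite /alphaR rmorph_sum /=; apply: eq_bigr => j _ /=.
by rewrite map_mpolyZ map_mpolyX /= intz.
Qed.

Lemma mq_Amul n (A : 'M[int]_(n, l)) g i :
  mq ((Apoly int A *m g) i ord0) = (Apoly rat A *m embZQ g) i ord0.
Proof.
rewrite !mxE rmorph_sum; apply: eq_bigr => j _.
by rewrite !mxE rmorphM /= map_mpolyC /= intz.
Qed.

Lemma entryM (R : comNzRingType) n (H a : 'I_n -> {mpoly R[l]}) i :
  (\sum_(i' < n) H i' *: (a i' *: (delta_mx i' (ord0 : 'I_1) : 'cV_n))) i ord0 = H i * a i.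
Proof.
rewrite summxE (bigD1 i) //= big1 ?addr0.
  by rewrite !mxE !eqxx mulr1.
by move=> i' ne; rewrite !mxE eq_sym (negbTE ne) /= !mulr0.
Qed.

End Aux.
Arguments mq_inj {l}.
Arguments clear1 {l}.
Arguments clearF {l I}.
Arguments mq_alpha {l n}.
Arguments mq_Amul {l n}.
Arguments entryM {l R n}.

Theorem lemma4p1 (n l : nat) (A : 'M[int]_(n, l)) (m : 'I_n -> nat) :
  no_prime_divides A -> distinct_hyperplanes A ->
  forall delta : 'cV[{mpoly rat[l]}]_l, Dmod A m delta <-> ker_tensorQ A m delta.
Proof.
move=> _ _ delta; split.
  move=> /fin_all_exists [h Hh].
  pose F (s : 'I_l + 'I_n) := match s with inl j => delta j ord0 | inr i => h i end.
  have [N [N0 HN]] := clearF F.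
  have /fin_all_exists [q Hq] := HN.
  exists 1%N, (fun _ => (N%:~R)^-1), (fun _ => \col_j q (inl j)); split.
    move=> _; exists (fun i => q (inr i)).
    apply/matrixP => i k; rewrite (ord1 k) {k}; apply: mq_inj.
    rewrite entryM rmorphM rmorphXn /= mq_alpha Hq /= mq_Amul.
    rewrite -mulrA [h i * _]mulrC -Hh !mxE mulr_sumr; apply: eq_bigr => j _.
    by rewrite !mxE Hq /=; ring.
  rewrite big_ord1; apply/matrixP => j k; rewrite (ord1 k) {k} !mxE Hq /=.
  rewrite mulrA -(rmorph_int (@mpolyC l rat)) -rmorphM mulVf ?intr_eq0 //.
  by rewrite rmorph1 mul1r.
move=> [k [c [g [Hg ->]]]].
move: Hg; rewrite /ker_phiZ /Mmod => /fin_all_exists [H HH].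
move=> i; exists (\sum_t (c t)%:MP * map_mpoly (fun z : int => (z%:~R : rat)) (H t i)).
rewrite mulmx_sumr summxE mulr_sumr; apply: eq_bigr => t _.
rewrite -scalemxAr mxE -mq_Amul (HH t) entryM rmorphM rmorphXn /= mq_alpha.
ring.
Qed.
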